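(* Let $G=(V,E)$ be a finite simple graph and let $L$ and $|H|$ be its connection matrix and its sign-less Hodge Laplacian (defined in the context). Then $L$ is invertible, its inverse $L^{-1}$ has integer entries, and $$|H| = L - L^{-1}.$$
   Context: Let $G=(V,E)$ be a finite simple graph. Its associated $1$-dimensional simplicial complex is the set of simplices $X=\{\{v\}: v\in V\}\cup E$, where each edge is regarded as a $2$-element subset of $V$; put $N=|V|+|E|$. Fix an ordering of $X$, so that real-valued functions on $X$ are vectors in $\mathbb{R}^N$ and operators on them are $N\times N$ matrices indexed by $X$. The connection matrix (connection Laplacian) $L$ is the $N\times N$ matrix with $L(x,y)=1$ if $x\cap y\neq\emptyset$ and $L(x,y)=0$ if $x\cap y=\emptyset$. The sign-less exterior derivative $|d|$ is the $N\times N$ matrix with $|d|(x,y)=1$ if $y\subset x$ and $|x|=|y|+1$, and $|d|(x,y)=0$ otherwise. The sign-less Hodge Laplacian is $|H|=(|d|+|d|^T)^2$. *)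

(* Defs.v *)
From HB Require Import structures.
From mathcomp Require Import all_boot all_order all_algebra.
Set Implicit Arguments. Unset Strict Implicit. Unset Printing Implicit Defensive.
Import Order.TTheory GRing.Theory Num.Theory.
Local Open Scope ring_scope.

(* A finite simple graph: vertex type T : finType, adjacency e : rel T
   (assumed symmetric and irreflexive in the theorem). *)
Definition is_simplex (T : finType) (e : rel T) (A : {set T}) : bool :=
  (#|A| == 1)%N || [exists x, exists y, e x y && (A == [set x; y])].

Definition simplex (T : finType) (e : rel T) := {A : {set T} | is_simplex e A}.

Definition nsimp (T : finType) (e : rel T) : nat := #|{: simplex e}|.

Definition sx (T : finType) (e : rel T) (i : 'I_(nsimp e)) : {set T} :=
  val (enum_val i : simplex e).

Definition conn_mx (T : finType) (e : rel T) : 'M[rat]_(nsimp e) :=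
  \matrix_(i, j) ((sx i :&: sx j != set0) : nat)%:R.

Definition dabs (T : finType) (e : rel T) : 'M[rat]_(nsimp e) :=
  \matrix_(i, j) (((sx j \subset sx i) && (#|sx i| == #|sx j|.+1)%N) : nat)%:R.

Definition hodge_abs (T : finType) (e : rel T) : 'M[rat]_(nsimp e) :=
  (dabs e + (dabs e)^T) *m (dabs e + (dabs e)^T).

(* Main.v *)
Require Import Defs.
From HB Require Import structures.
From mathcomp Require Import all_boot all_order all_algebra.
Set Implicit Arguments. Unset Strict Implicit. Unset Printing Implicit Defensive.
Import Order.TTheory GRing.Theory Num.Theory.
Local Open Scope ring_scope.

Lemma sx_inj (T : finType) (e : rel T) : injective (@sx T e).
Proof. move=> i j /val_inj /enum_val_inj. done. Qed.

Lemma sx_card (T : finType) (e : rel T) (e_irr : irreflexive e) (i : 'I_(nsimp e)) :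
  (#|sx i| == 1)%N || (#|sx i| == 2)%N.
Proof.
rewrite /sx; case: (enum_val i) => A /= /orP[->//|/existsP[x /existsP[y /andP[exy /eqP->]]]].
rewrite cards2; apply/orP; right; case: (x =P y) => [xy|//]; by rewrite xy e_irr in exy.
Qed.

Lemma simplex1 (T : finType) (e : rel T) (v : T) : is_simplex e [set v].
Proof. by rewrite /is_simplex cards1. Qed.

Definition iv (T : finType) (e : rel T) (v : T) : 'I_(nsimp e) :=
  enum_rank (Sub [set v] (simplex1 e v) : simplex e).

Lemma sx_iv (T : finType) (e : rel T) (v : T) : sx (iv e v) = [set v].
Proof. by rewrite /sx /iv enum_rankK SubK. Qed.
Definition vx (T : finType) (k : 'I_#|T|) : T := enum_val k.

Lemma sumJ1 (T : finType) (a : T) (F : 'I_#|T| -> rat) :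
  \sum_k (([set a] == [set vx k]) : nat)%:R * F k = F (enum_rank a).
Proof.
rewrite (bigD1 (enum_rank a)) //= /vx enum_rankK eqxx mul1r big1 ?addr0 // => k nk.
case: eqP => [/set1_inj ak|]; last by rewrite mul0r.
by rewrite ak enum_valK eqxx in nk.
Qed.

Lemma sumJ0 (T : finType) (S : {set T}) (F : 'I_#|T| -> rat) :
  #|S| != 1%N -> \sum_k ((S == [set vx k]) : nat)%:R * F k = 0.
Proof.
move=> hS; rewrite big1 // => k _; case: eqP => [Sk|]; last by rewrite mul0r.
by rewrite Sk cards1 in hS.
Qed.

Lemma sumS1 (T : finType) (e : rel T) (v : T) (F : 'I_(nsimp e) -> rat) :
  \sum_i ((sx i == [set v]) : nat)%:R * F i = F (iv e v).
Proof.
rewrite (bigD1 (iv e v)) //= sx_iv eqxx mul1r big1 ?addr0 // => i ni.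
case: eqP => [si|]; last by rewrite mul0r.
by rewrite -(sx_iv e v) in si; rewrite (sx_inj si) eqxx in ni.
Qed.

Definition Jm (T : finType) (e : rel T) : 'M[rat]_(nsimp e, #|T|) :=
  \matrix_(i, k) ((sx i == [set vx k]) : nat)%:R.
Definition Bm (T : finType) (e : rel T) : 'M[rat]_(nsimp e, #|T|) :=
  \matrix_(i, k) (((#|sx i| == 2) && (vx k \in sx i)) : nat)%:R.
Definition Pm (T : finType) (e : rel T) : 'M[rat]_(nsimp e) :=
  \matrix_(i, j) (((i == j) && (#|sx i| == 2)) : nat)%:R.
Lemma JtJ (T : finType) (e : rel T) : (Jm e)^T *m Jm e = 1%:M.
Proof.
apply/matrixP => k k'; rewrite !mxE.
under eq_bigr do rewrite !mxE.
rewrite sumS1 sx_iv (inj_eq set1_inj) /vx (inj_eq enum_val_inj).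
by case: (k == k').
Qed.

Lemma JtB (T : finType) (e : rel T) : (Jm e)^T *m Bm e = 0.
Proof.
apply/matrixP => k k'; rewrite !mxE big1 // => i _; rewrite !mxE.
case: (sx i =P [set vx k]) => [->|]; last by rewrite mul0r.
by rewrite cards1.
Qed.

Lemma BtJ (T : finType) (e : rel T) : (Bm e)^T *m Jm e = 0.
Proof. by rewrite -[Jm e]trmxK -trmx_mul JtB trmx0. Qed.

Lemma JtP (T : finType) (e : rel T) : (Jm e)^T *m Pm e = 0.
Proof.
apply/matrixP => k k'; rewrite !mxE big1 // => i _; rewrite !mxE.
case: (sx i =P [set vx k]) => [->|]; last by rewrite mul0r.
by rewrite cards1 andbF mulr0.
Qed.

Lemma PJ (T : finType) (e : rel T) : Pm e *m Jm e = 0.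
Proof.
apply/matrixP => k k'; rewrite !mxE big1 // => i _; rewrite !mxE.
case: (k =P i) => [->|]; last by rewrite mul0r.
case: (sx i =P [set vx k']) => [->|]; last by rewrite mulr0.
by rewrite cards1.
Qed.

Lemma PB (T : finType) (e : rel T) : Pm e *m Bm e = Bm e.
Proof.
apply/matrixP => i k; rewrite !mxE (bigD1 i) //= big1 ?addr0.
  rewrite !mxE eqxx /=; by case: (#|sx i| == 2)%N; rewrite ?mul1r ?mul0r.
by move=> j nj; rewrite !mxE eq_sym (negbTE nj) mul0r.
Qed.

Lemma BtP (T : finType) (e : rel T) : (Bm e)^T *m Pm e = (Bm e)^T.
Proof.
apply/matrixP => k i; rewrite !mxE (bigD1 i) //= big1 ?addr0.
  rewrite !mxE eqxx /=; by case: (#|sx i| == 2)%N; rewrite ?mulr1 ?mulr0.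
by move=> j nj; rewrite !mxE (negbTE nj) mulr0.
Qed.

Lemma XP (T : finType) (e : rel T) (e_irr : irreflexive e) :
  Jm e *m (Jm e)^T + Pm e = 1%:M.
Proof.
apply/matrixP => i j; rewrite !mxE.
under eq_bigr do rewrite !mxE.
have := sx_card e_irr i; case/orP => [/cards1P [a sa]|c2].
  rewrite sa (sumJ1 a (fun k => ((sx j == [set vx k]) : nat)%:R)) /vx enum_rankK -sa.
  rewrite (inj_eq (@sx_inj _ e)) eq_sym sa cards1 andbF addr0.
  by case: (i == j).
rewrite sumJ0 ?(eqP c2) // add0r.
by rewrite andbT.
Qed.
Lemma sumcap (T : finType) (A B : {set T}) :
  \sum_(k < #|T|) ((vx k \in A) : nat)%:R * ((vx k \in B) : nat)%:R = #|A :&: B|%:R :> rat.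
Proof.
under eq_bigr do rewrite -natrM.
rewrite -natr_sum; congr (_%:R).
rewrite (eq_bigr (fun k => ((enum_val k \in A) && (enum_val k \in B) : nat))); last first.
  by move=> k _; rewrite /vx; case: (_ \in A); case: (_ \in B).
rewrite -(big_enum_val (fun x => ((x \in A) && (x \in B) : nat))) /=.
rewrite -sum1_card [RHS]big_mkcond /=.
apply: eq_bigr => x _; rewrite inE.
by case: (x \in A); case: (x \in B).
Qed.
Lemma Wm (T : finType) (e : rel T) (e_irr : irreflexive e) :
  Jm e + Bm e = \matrix_(i, k) ((vx k \in sx i) : nat)%:R.
Proof.
apply/matrixP => i k; rewrite !mxE.
have := sx_card e_irr i; case/orP => [/cards1P [a sa]|c2].
  by rewrite sa cards1 /= addr0 (inj_eq set1_inj) in_set1 eq_sym.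
rewrite (eqP c2) /=; case: (sx i =P [set vx k]) => [si|_]; last by rewrite add0r.
by rewrite si cards1 in c2.
Qed.

Lemma card_sx_le2 (T : finType) (e : rel T) (e_irr : irreflexive e) i :
  (#|@sx T e i| <= 2)%N.
Proof. by have := sx_card e_irr i; case/orP => /eqP ->. Qed.

Lemma connE (T : finType) (e : rel T) (e_irr : irreflexive e) :
  conn_mx e = (Jm e + Bm e) *m (Jm e + Bm e)^T - Pm e.
Proof.
rewrite Wm //; apply/matrixP => i j; rewrite !mxE.
under eq_bigr do rewrite !mxE.
rewrite sumcap -card_gt0.
case: (i =P j) => [<-|nij].
  rewrite setIid /=; have := sx_card e_irr i; case/orP => /eqP ->.
    by rewrite subr0.
  by rewrite (natrD _ 1 1) addrK.
rewrite subr0.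
have hA := subset_leq_card (subsetIl (sx i) (sx j)).
have hB := subset_leq_card (subsetIr (sx i) (sx j)).
have i2 := card_sx_le2 e_irr i; have j2 := card_sx_le2 e_irr j.
have : (#|sx i :&: sx j| < 2)%N.
  rewrite ltnNge; apply/negP => c2.
  have eA : sx i :&: sx j = sx i.
    by apply/eqP; rewrite eqEcard subsetIl; apply: leq_trans i2 c2.
  have eB : sx i :&: sx j = sx j.
    by apply/eqP; rewrite eqEcard subsetIr; apply: leq_trans j2 c2.
  by apply: nij; apply: (@sx_inj _ e); exact: (etrans (esym eA) eB).
by case: #|_| => [|[|]].
Qed.

Lemma dabsE (T : finType) (e : rel T) (e_irr : irreflexive e) :
  dabs e = Bm e *m (Jm e)^T.
Proof.
apply/matrixP => i j; rewrite !mxE.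
under eq_bigr do rewrite !mxE.
have := sx_card e_irr j; case/orP => [/cards1P [a sa]|c2].
  under eq_bigr do rewrite mulrC.
  rewrite sa (sumJ1 a (fun k => (((#|sx i| == 2) && (vx k \in sx i)) : nat)%:R)).
  by rewrite /vx enum_rankK cards1 sub1set andbC.
under eq_bigr do rewrite mulrC.
rewrite sumJ0 ?(eqP c2) //.
by rewrite (ltn_eqF (leq_ltn_trans (card_sx_le2 e_irr i) (ltnSn _))) andbF.
Qed.
Lemma trD (N n : nat) (J B : 'M[rat]_(N,n)) : (J + B)^T = J^T + B^T.
Proof. by apply/matrixP => i j; rewrite !mxE. Qed.

Lemma alg (N n : nat) (J B : 'M[rat]_(N,n)) (P : 'M[rat]_N) :
  J^T *m J = 1%:M -> J^T *m B = 0 -> B^T *m J = 0 -> J^T *m P = 0 ->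
  B^T *m P = B^T -> P *m J = 0 -> P *m B = B -> J *m J^T + P = 1%:M ->
  ((J + B) *m (J + B)^T - P) *m
  (((J + B) *m (J + B)^T - P) - (B *m J^T + (B *m J^T)^T) *m (B *m J^T + (B *m J^T)^T))
  = 1%:M.
Proof.
move=> hJJ hJB hBJ hJP hBP hPJ hPB hX.
have hJJ' p (X : 'M_(n, p)) : J^T *m (J *m X) = X by rewrite mulmxA hJJ mul1mx.
have hJB' p (X : 'M_(n, p)) : J^T *m (B *m X) = 0 by rewrite mulmxA hJB mul0mx.
have hBJ' p (X : 'M_(n, p)) : B^T *m (J *m X) = 0 by rewrite mulmxA hBJ mul0mx.
have hJP' p (X : 'M_(N, p)) : J^T *m (P *m X) = 0 by rewrite mulmxA hJP mul0mx.
have hBP' p (X : 'M_(N, p)) : B^T *m (P *m X) = B^T *m X by rewrite mulmxA hBP.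
have hPJ' p (X : 'M_(n, p)) : P *m (J *m X) = 0 by rewrite mulmxA hPJ mul0mx.
have hPB' p (X : 'M_(n, p)) : P *m (B *m X) = B *m X by rewrite mulmxA hPB.
have hPP : P *m P = P.
  have := congr1 (mulmx P) hX; rewrite mulmxDr mulmxA hPJ mul0mx add0r mulmx1 //.
have DD : (B *m J^T + (B *m J^T)^T) *m (B *m J^T + (B *m J^T)^T)
          = B *m B^T + J *m (B^T *m (B *m J^T)).
  rewrite trmx_mul trmxK mulmxDl !mulmxDr -!mulmxA hJB' hJJ' hBJ' mulmx0 mulmx0.
  by rewrite addr0 add0r.
rewrite DD.
set K' := J *m J^T + J *m B^T + B *m J^T - P - J *m (B^T *m (B *m J^T)).
have KE : (J + B) *m (J + B)^T - P - (B *m B^T + J *m (B^T *m (B *m J^T))) = K'.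
  rewrite /K' trD mulmxDl !mulmxDr.
  rewrite opprD addrA addrA (addrAC _ (B *m B^T) (- P)) addrK.
  by rewrite -!addrA.
rewrite KE.
have WK : (J + B)^T *m K' = J^T.
  rewrite /K' trD mulmxDl !mulmxBr !mulmxDr -?mulmxA.
  rewrite ?hJJ' ?hJB' ?hJP ?hBJ' ?hBP ?hJJ ?hJB ?hBJ ?mulmx0 ?mul0mx.
  by rewrite !addr0 !subr0 !add0r addrA subrK addrK.
rewrite mulmxBl -mulmxA WK.
have PK : P *m K' = B *m J^T - P.
  rewrite /K' !mulmxBr !mulmxDr -?mulmxA ?hPJ' ?hPB' ?hPP.
  by rewrite !add0r subr0.
rewrite PK mulmxDl.
by rewrite opprB addrA (addrAC _ (B *m J^T) P) addrK hX.
Qed.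
Definition connz (T : finType) (e : rel T) : 'M[int]_(nsimp e) :=
  \matrix_(i, j) ((sx i :&: sx j != set0) : nat)%:R.
Definition dabsz (T : finType) (e : rel T) : 'M[int]_(nsimp e) :=
  \matrix_(i, j) (((sx j \subset sx i) && (#|sx i| == #|sx j|.+1)%N) : nat)%:R.

Theorem mainTheorem1 (T : finType) (e : rel T)
  (e_sym : symmetric e) (e_irr : irreflexive e) :
  conn_mx e \in unitmx /\
  (exists M : 'M[int]_(nsimp e), invmx (conn_mx e) = map_mx (fun z : int => z%:~R) M) /\
  hodge_abs e = conn_mx e - invmx (conn_mx e).
Proof.
have hLK : conn_mx e *m (conn_mx e - hodge_abs e) = 1%:M.
  rewrite /hodge_abs dabsE // connE //; apply: alg.
  - exact: JtJ.
  - exact: JtB.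
  - exact: BtJ.
  - exact: JtP.
  - exact: BtP.
  - exact: PJ.
  - exact: PB.
  - exact: XP.
have [Lu _] := mulmx1_unit hLK.
have hinv : invmx (conn_mx e) = conn_mx e - hodge_abs e.
  by have := mulKmx Lu (conn_mx e - hodge_abs e); rewrite hLK mulmx1.
split=> //; split; last by rewrite hinv opprB addrC subrK.
exists (connz e - (dabsz e + (dabsz e)^T) *m (dabsz e + (dabsz e)^T)).
rewrite hinv map_mxB map_mxM map_mxD -map_trmx.
have -> : map_mx (fun z : int => z%:~R) (connz e) = conn_mx e.
  by apply/matrixP => i j; rewrite !mxE rmorph_nat.
have -> : map_mx (fun z : int => z%:~R) (dabsz e) = dabs e.
  by apply/matrixP => i j; rewrite !mxE rmorph_nat.
by [].
Qed.
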